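(* For every $n\ge 4$, $$h_3(n,\{(4,0),(4,1),(4,3)\}) = \begin{cases} \dfrac{n}{2} & \text{if } n\equiv 0 \pmod 6,\\[2mm] \left\lceil \dfrac{n+1}{2}\right\rceil & \text{if } n\not\equiv 0 \pmod 6.\end{cases}$$
   Context: For an $r$-uniform hypergraph ($r$-graph) $H$, a homogeneous set is a set of vertices that is either a clique (every $r$-subset is an edge) or a coclique (no $r$-subset is an edge); $h(H)$ denotes the size of a largest homogeneous set. An $(m,f)$-graph is an $r$-graph with $m$ vertices and $f$ edges; $H$ is $(m,f)$-free if it contains no induced sub-hypergraph that is an $(m,f)$-graph. For a set $Q$ of pairs $(m,f)$, $H$ is $Q$-free if it is $(m,f)$-free for every $(m,f)\in Q$. $h_r(n,Q)$ is the minimum of $h(H)$ over all $n$-vertex $Q$-free $r$-graphs $H$. *)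

(* Defs.v *)
From mathcomp Require Import all_boot.
Set Implicit Arguments. Unset Strict Implicit. Unset Printing Implicit Defensive.

Definition uniform (r n : nat) (E : {set {set 'I_n}}) : bool :=
  [forall e in E, #|e| == r].

Definition is_clique (r n : nat) (E : {set {set 'I_n}}) (S : {set 'I_n}) : bool :=
  [forall e : {set 'I_n}, ((e \subset S) && (#|e| == r)) ==> (e \in E)].

Definition is_coclique (r n : nat) (E : {set {set 'I_n}}) (S : {set 'I_n}) : bool :=
  [forall e : {set 'I_n}, ((e \subset S) && (#|e| == r)) ==> (e \notin E)].

Definition homogeneous (r n : nat) (E : {set {set 'I_n}}) (S : {set 'I_n}) : bool :=
  is_clique r E S || is_coclique r E S.

Definition hom_num (r n : nat) (E : {set {set 'I_n}}) : nat :=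
  \max_(S : {set 'I_n} | homogeneous r E S) #|S|.

Definition has_induced (n : nat) (E : {set {set 'I_n}}) (m f : nat) : bool :=
  [exists S : {set 'I_n}, (#|S| == m) && (#|[set e in E | e \subset S]| == f)].

Definition Qfree (n : nat) (E : {set {set 'I_n}}) (Q : seq (nat * nat)) : bool :=
  all (fun mf => ~~ has_induced E mf.1 mf.2) Q.

(* h_r(n,Q): minimum of h(H) over all n-vertex Q-free r-graphs H.
   (Default value n if there is none; h(H) <= n always.) *)
Definition h_r (r n : nat) (Q : seq (nat * nat)) : nat :=
  \big[minn/n]_(E : {set {set 'I_n}} | uniform r E && Qfree E Q) hom_num r E.

(* Main.v *)
Require Import Defs.
From mathcomp Require Import all_boot.
From mathcomp Require Import zify.
Set Implicit Arguments. Unset Strict Implicit. Unset Printing Implicit Defensive.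

Definition cyc (i j : nat) : bool :=
  (i < 5) && (j < 5) && ((j == (i + 1) %% 5) || (i == (j + 1) %% 5)).
Definition pat (i : nat) : seq bool := [seq cyc i j | j <- iota 0 5].
Definition typ (b : seq bool) : nat :=
  let k := find (fun i => b == pat i) (iota 0 5) in if k < 5 then k.+1 else 0.
Definition adjT (t u : nat) : bool := (0 < t) && (0 < u) && cyc t.-1 u.-1.
Definition valid (b : seq bool) : bool :=
  (size b == 5) && all (fun j => nth false b j == adjT (typ b) j.+1) (iota 0 5).

Definition good4 (T : Type) (A : T -> T -> bool) (a b c d : T) : bool :=
  ~~ [&& odd (A a b + A a c + A b c), odd (A a b + A a d + A b d),
         odd (A a c + A a d + A c d) & odd (A b c + A b d + A c d)].

Definition all4 (k : nat) (P : nat -> nat -> nat -> nat -> bool) : bool :=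
  all (fun i => all (fun j => all (fun l => all (fun m =>
    if [&& i < j, j < l & l < m] then P i j l m else true) (iota 0 k)) (iota 0 k)) (iota 0 k)) (iota 0 k).

(* vertices 0..4 cycle, 5 = v (isolated), 6 = y *)
Definition adj7 (b : seq bool) (i j : nat) : bool :=
  if i == j then false else
  if (i < 5) && (j < 5) then cyc i j else
  if (i == 6) && (j < 5) then nth false b j else
  if (j == 6) && (i < 5) then nth false b i else false.

(* 0..4 cycle, 5 = v, 6 = y, 7 = z *)
Definition adj8 (b1 b2 : seq bool) (e : bool) (i j : nat) : bool :=
  if i == j then false else
  if (i < 5) && (j < 5) then cyc i j else
  if (i == 6) && (j < 5) then nth false b1 j else
  if (j == 6) && (i < 5) then nth false b1 i else
  if (i == 7) && (j < 5) then nth false b2 j else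
  if (j == 7) && (i < 5) then nth false b2 i else
  if ((i == 6) && (j == 7)) || ((i == 7) && (j == 6)) then e else false.

Fixpoint allbits (k : nat) : seq (seq bool) :=
  if k is k'.+1 then [seq b :: s | b <- [:: false; true], s <- allbits k'] else [:: [::]].

Lemma allbitsP k (s : seq bool) : size s = k -> s \in allbits k.
Proof.
elim: k s => [|k IH] [|b s] //= [] /IH H.
by case: b; rewrite /= ?mem_cat map_f ?orbT.
Qed.

Definition check7 : bool :=
  all (fun b => if all4 7 (good4 (adj7 b)) then valid b else true) (allbits 5).
Lemma check7_ok : check7. Proof. vm_cast_no_check (erefl true). Qed.

Definition check8 : bool :=
  all (fun b1 => all (fun b2 => all (fun e =>
    if valid b1 then if valid b2 then if all4 8 (good4 (adj8 b1 b2 e)) then (e == adjT (typ b1) (typ b2)) else true else true else true)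
    [:: false; true]) (allbits 5)) (allbits 5).
Lemma check8_ok : check8. Proof. vm_cast_no_check (erefl true). Qed.

Lemma all4_of k (P : nat -> nat -> nat -> nat -> bool) : (forall i j l m, i < j -> j < l -> l < m -> m < k -> P i j l m) -> all4 k P.
Proof.
move=> H; apply/allP => i _; apply/allP => j _; apply/allP => l _; apply/allP => m.
rewrite mem_iota add0n => Hm.
by case: ifP => // /and3P [H1 H2 H3]; apply: H.
Qed.

Lemma k7 b : size b = 5 ->
  (forall i j l m, i < j -> j < l -> l < m -> m < 7 -> good4 (adj7 b) i j l m) -> valid b.
Proof.
move=> Hs H; have := check7_ok; rewrite /check7 => /allP /(_ b (allbitsP Hs)).
by rewrite (all4_of H).
Qed.

Lemma k8 b1 b2 e : valid b1 -> valid b2 ->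
  (forall i j l m, i < j -> j < l -> l < m -> m < 8 -> good4 (adj8 b1 b2 e) i j l m) ->
  e = adjT (typ b1) (typ b2).
Proof.
move=> V1 V2 H.
have S1 : size b1 = 5 by move: V1 => /andP [/eqP].
have S2 : size b2 = 5 by move: V2 => /andP [/eqP].
have := check8_ok; rewrite /check8 => /allP /(_ b1 (allbitsP S1)) /allP /(_ b2 (allbitsP S2)).
have He : e \in [:: false; true] by rewrite !inE eqb_id eqbF_neg orNb.
by move=> /allP /(_ e He); rewrite V1 V2 (all4_of H) => /eqP.
Qed.

Lemma validP b j : valid b -> j < 5 -> nth false b j = adjT (typ b) j.+1.
Proof.
by move=> /andP [_ /allP H] Hj; apply/eqP; apply: H; rewrite mem_iota.
Qed.

Lemma typ_pat i : i < 5 -> typ (pat i) = i.+1.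
Proof. by do 5 (case: i => [|i] //). Qed.

Lemma valid_pat i : i < 5 -> valid (pat i).
Proof. by do 5 (case: i => [|i] //). Qed.

Lemma valid0 : valid (nseq 5 false). Proof. by []. Qed.
Lemma typ0 : typ (nseq 5 false) = 0. Proof. by []. Qed.

Lemma typ_lt6 b : typ b < 6.
Proof. by rewrite /typ; case: ifP. Qed.

Lemma cyc_sym i j : cyc i j = cyc j i.
Proof. by rewrite /cyc orbC [(i < 5) && _]andbC. Qed.

Lemma adjT_sym t u : adjT t u = adjT u t.
Proof. by rewrite /adjT cyc_sym [(0 < t) && _]andbC. Qed.

Lemma adjT_irr t : adjT t t = false.
Proof.
rewrite /adjT; case: t => //= t.
have [H|H] := ltnP t 5; first by move: H; do 5 (case: t => [|t] //).
by rewrite /cyc ltnNge H.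
Qed.

Lemma enum_set (T : finType) (S : {set T}) : S = [set x in enum S].
Proof. by apply/setP => x; rewrite inE mem_enum. Qed.

Lemma pick3 (T : finType) (e : {set T}) : #|e| = 3 ->
  exists a b c, uniq [:: a; b; c] /\ e = [set a; b; c].
Proof.
move=> H; have U := enum_uniq (mem e); have Hs : size (enum e) = 3 by rewrite -cardE.
move: U Hs (enum_set e); case: (enum e) => [|a [|b [|c [|d r]]]] // U _ E.
exists a, b, c; split => //; rewrite E; apply/setP => x; by rewrite !inE -!orbA.
Qed.

Lemma pick4 (T : finType) (e : {set T}) : #|e| = 4 ->
  exists a b c d, uniq [:: a; b; c; d] /\ e = [set a; b; c; d].
Proof.
move=> H; have U := enum_uniq (mem e); have Hs : size (enum e) = 4 by rewrite -cardE.
move: U Hs (enum_set e); case: (enum e) => [|a [|b [|c [|d [|f r]]]]] // U _ E.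
exists a, b, c, d; split => //; rewrite E; apply/setP => x; by rewrite !inE -!orbA.
Qed.

Lemma pick4sub (T : finType) (S : {set T}) : 4 <= #|S| ->
  exists a b c d, [/\ uniq [:: a; b; c; d], a \in S, b \in S, c \in S & d \in S].
Proof.
move=> H; have U := enum_uniq (mem S); have Hs : 4 <= size (enum S) by rewrite -cardE.
have M x : (x \in S) = (x \in enum S) by rewrite mem_enum.
move: U Hs M; case: (enum S) => [|a [|b [|c [|d r]]]] // U _ M.
exists a, b, c, d; split; rewrite ?M ?inE ?eqxx ?orbT //.
by move: U; rewrite -[_ :: _]/([:: a; b; c; d] ++ r) cat_uniq => /andP[].
Qed.

Lemma card_set4 (T : finType) (a b c d : T) : uniq [:: a; b; c; d] -> #|[set a; b; c; d]| = 4.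
Proof.
move=> U; have -> : [set a; b; c; d] = [set x in [:: a; b; c; d]].
  by apply/setP => x; rewrite !inE -!orbA.
by rewrite cardsE; move/card_uniqP: U.
Qed.

Lemma card_set3 (T : finType) (a b c : T) : uniq [:: a; b; c] -> #|[set a; b; c]| = 3.
Proof.
move=> U; have -> : [set a; b; c] = [set x in [:: a; b; c]].
  by apply/setP => x; rewrite !inE -!orbA.
by rewrite cardsE; move/card_uniqP: U.
Qed.

Ltac setsolve := apply/setP => ?; rewrite !inE;
  repeat match goal with |- context [?y == ?z] => case: (y == z) end; by [].

Lemma uniq4E (T : eqType) (a b c d : T) : uniq [:: a; b; c; d] ->
  [/\ a != b, a != c, a != d, b != c & b != d] /\ c != d.
Proof. by rewrite /= !inE !negb_or => /and4P [/and3P[-> -> ->] /andP[-> ->] -> _]. Qed.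

Lemma sub4 (T : finType) (a b c d : T) (e : {set T}) : uniq [:: a; b; c; d] ->
  #|e| = 3 -> e \subset [set a; b; c; d] ->
  e \in [:: [set a; b; c]; [set a; b; d]; [set a; c; d]; [set b; c; d]].
Proof.
move=> U He Hs; set S := [set a; b; c; d].
have cS := card_set4 U.
have : #|S :\: e| = 1 by rewrite cardsD (setIidPr Hs) cS He.
move/eqP; case/cards1P => x Hx.
have Hy y : (y \in S :\: e) = (y == x) by rewrite Hx inE.
have xS : x \in S by move: (Hy x); rewrite eqxx inE => /andP[].
have -> : e = S :\ x.
  apply/setP => y; move: (Hy y); rewrite !inE.
  case: (boolP (y \in e)) => ye.
    by move: (subsetP Hs y ye); rewrite !inE => -> /= <-.
  by case: ((y == a) || _ || _ || _) => //= <-.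
have [[ab ac ad bc bd] cd] := uniq4E U.
have nin (z : T) (A : {set T}) : z \notin A -> (z |: A) :\ z = A by move=> H; apply: setU1K.
move: xS; rewrite /S !inE -!orbA => /or4P [] /eqP ->.
- have -> : [set a; b; c; d] = a |: [set b; c; d] by setsolve.
  rewrite setU1K ?eqxx ?orbT //.
  by rewrite !inE !negb_or ab ac ad.
- have -> : [set a; b; c; d] = b |: [set a; c; d] by setsolve.
  rewrite setU1K ?eqxx ?orbT //.
  by rewrite !inE !negb_or eq_sym ab bc bd.
- have -> : [set a; b; c; d] = c |: [set a; b; d] by setsolve.
  rewrite setU1K ?eqxx ?orbT //.
  by rewrite !inE !negb_or eq_sym ac (eq_sym c) bc cd.
- have -> : [set a; b; c; d] = d |: [set a; b; c] by setsolve.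
  rewrite setU1K ?eqxx ?orbT //.
  by rewrite !inE !negb_or eq_sym ad (eq_sym d) bd (eq_sym d) cd.
Qed.

Lemma neq_set (T : finType) (A B : {set T}) x : x \in B -> x \notin A -> A != B.
Proof. by move=> xB xA; apply/eqP => H; rewrite H xB in xA. Qed.

Lemma card4 (T : finType) (E : {set {set T}}) (a b c d : T) :
  (forall e, e \in E -> #|e| = 3) -> uniq [:: a; b; c; d] ->
  #|[set e in E | e \subset [set a; b; c; d]]| =
  ([set a; b; c] \in E) + ([set a; b; d] \in E) + ([set a; c; d] \in E) + ([set b; c; d] \in E).
Proof.
move=> HE U; have [[ab ac ad bc bd] cd] := uniq4E U.
have ba : b != a by rewrite eq_sym. have ca : c != a by rewrite eq_sym.
have da : d != a by rewrite eq_sym. have cb : c != b by rewrite eq_sym.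
have db : d != b by rewrite eq_sym. have dc : d != c by rewrite eq_sym.
set L := [:: [set a; b; c]; [set a; b; d]; [set a; c; d]; [set b; c; d]].
have UL : uniq L.
  rewrite /L /= !inE !negb_or; apply/and4P; split => //.
  - apply/and3P; split; apply: (@neq_set _ _ _ d); by rewrite !inE ?eqxx ?orbT ?negb_or ?da ?db ?dc.
  - apply/andP; split; apply: (@neq_set _ _ _ c); by rewrite !inE ?eqxx ?orbT ?negb_or ?ca ?cb ?cd ?ca.
  - apply: (@neq_set _ _ _ b); by rewrite !inE ?eqxx ?orbT ?negb_or ?ba ?bc ?bd.
have -> : [set e in E | e \subset [set a; b; c; d]] = [set e in filter (mem E) L].
  apply/setP => e; rewrite !inE mem_filter.
  apply/andP/andP => [[eE H]|[eE H]]; split => //.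
    exact: (sub4 U (HE e eE) H).
  by move: H; rewrite !inE => /or4P [] /eqP -> ; apply/subsetP => y; rewrite !inE;
    repeat match goal with |- context [?y == ?z] => case: (y == z) end.
rewrite cardsE (card_uniqP (filter_uniq _ UL)) size_filter /=.
by rewrite !addnA addn0.
Qed.

Definition Tn n := if 6 %| n then n %/ 2 else (n + 2) %/ 2.

Definition cliqueF n (F : 'I_n -> 'I_n -> bool) (h : nat) :=
  forall S : {set 'I_n}, (forall a b c, a \in S -> b \in S -> c \in S -> uniq [:: a; b; c] ->
     ~~ odd (F a b + F a c + F b c)) -> #|S| <= h.

Lemma card_types n (ty : 'I_n -> nat) (L : seq nat) : uniq L ->
  #|[set y | ty y \in L]| = \sum_(t <- L) #|[set y | ty y == t]|.
Proof.
elim: L => [|t L IH] /=; first by move=> _; rewrite big_nil; apply: eq_card0 => y; rewrite !inE.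
move=> /andP [tL U]; rewrite big_cons -IH //.
have -> : [set y | ty y \in t :: L] = [set y | ty y == t] :|: [set y | ty y \in L].
  by apply/setP => y; rewrite !inE.
rewrite cardsU.
have -> : [set y | ty y == t] :&: [set y | ty y \in L] = set0.
  apply/setP => y; rewrite !inE; case: eqP => // ->; by rewrite (negbTE tL).
by rewrite cards0 subn0.
Qed.

Lemma nth_map_iota (T : Type) (f : nat -> T) x0 k j : j < k -> nth x0 [seq f i | i <- iota 0 k] j = f j.
Proof. by move=> H; rewrite (nth_map 0) ?size_iota // nth_iota. Qed.

Lemma transfer n (F : 'I_n -> 'I_n -> bool) (s : seq 'I_n) (A : nat -> nat -> bool) x0 k :
  uniq s -> size s = k ->
  (forall i j, i < k -> j < k -> A i j = F (nth x0 s i) (nth x0 s j)) ->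
  (forall a b d e, uniq [:: a; b; d; e] -> good4 F a b d e) ->
  forall i j l m, i < j -> j < l -> l < m -> m < k -> good4 A i j l m.
Proof.
move=> U Hs HA NA i j l m ij jl lm mk.
have ik : i < k by lia. have jk : j < k by lia. have lk : l < k by lia.
rewrite /good4 !HA //.
have ne p q : p < k -> q < k -> p != q -> nth x0 s p != nth x0 s q.
  by move=> pk qk; rewrite nth_uniq ?Hs.
apply: NA; rewrite /= !inE !negb_or !ne //; lia.
Qed.

Lemma lowerB n (F : 'I_n -> 'I_n -> bool) (v : 'I_n) (c : nat -> 'I_n) h :
  (forall x y, F x y = F y x) -> (forall x, F x x = false) -> (forall x, F v x = false) ->
  (forall a b d e, uniq [:: a; b; d; e] -> good4 F a b d e) ->
  (forall i j, i < 5 -> j < 5 -> F (c i) (c j) = cyc i j) ->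
  cliqueF F h -> Tn n <= h.
Proof.
move=> Fsym Firr Fv NA Cc Hcl.
have Fv' x : F x v = false by rewrite Fsym.
pose bitsF y := [seq F y (c j) | j <- iota 0 5].
pose ty y := typ (bitsF y).
have bc i : i < 5 -> bitsF (c i) = pat i.
  move=> Hi; apply/eq_in_map => j; rewrite mem_iota add0n => Hj; exact: Cc.
have tyc i : i < 5 -> ty (c i) = i.+1 by move=> Hi; rewrite /ty bc // typ_pat.
have bv : bitsF v = nseq 5 false by rewrite /bitsF /= !Fv.
have tyv : ty v = 0 by rewrite /ty bv.
have Us6 : uniq [:: c 0; c 1; c 2; c 3; c 4; v].
  by apply: (@map_uniq _ _ ty); rewrite /= !tyc ?tyv.
have notc y : ~~ [exists i : 'I_5, y == c i] -> y != v -> y \notin [:: c 0; c 1; c 2; c 3; c 4; v].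
  move=> /existsPn yc yv.
  have yci i : i < 5 -> (y == c i) = false by move=> Hi; apply/negbTE; exact: (yc (Ordinal Hi)).
  by rewrite !inE !yci // (negbTE yv).
have K1 y : valid (bitsF y).
  case: (eqVneq y v) => [->|yv]; first by rewrite bv.
  case: (boolP [exists i : 'I_5, y == c i]) => [/existsP [i /eqP ->]|yc].
    by rewrite bc // valid_pat.
  apply: k7; first by rewrite size_map size_iota.
  apply: (@transfer _ F [:: c 0; c 1; c 2; c 3; c 4; v; y] _ v) => //.
    have -> : [:: c 0; c 1; c 2; c 3; c 4; v; y] = [:: c 0; c 1; c 2; c 3; c 4; v] ++ [:: y] by [].
    by rewrite cat_uniq Us6 /= orbF notc.
  move=> i j Hi Hj.
  case: i Hi => [|[|[|[|[|[|[|i]]]]]]] Hi //; case: j Hj => [|[|[|[|[|[|[|j]]]]]]] Hj //;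
    rewrite /adj7 /= ?Firr ?Cc ?Fv ?Fv' //; by rewrite Fsym.
have K2 y z : F y z = adjT (ty y) (ty z).
  case: (eqVneq y z) => [->|yz]; first by rewrite Firr adjT_irr.
  case: (eqVneq y v) => [->|yv]; first by rewrite Fv tyv.
  case: (eqVneq z v) => [->|zv]; first by rewrite Fv' tyv adjT_sym.
  case: (boolP [exists i : 'I_5, y == c i]) => [/existsP [i /eqP ->]|yc].
    rewrite tyc // Fsym adjT_sym -validP //.
    by rewrite /bitsF nth_map_iota.
  case: (boolP [exists i : 'I_5, z == c i]) => [/existsP [i /eqP ->]|zc].
    rewrite tyc // -validP //.
    by rewrite /bitsF nth_map_iota.
  apply: k8 => //.
  apply: (@transfer _ F [:: c 0; c 1; c 2; c 3; c 4; v; y; z] _ v) => //.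
    have -> : [:: c 0; c 1; c 2; c 3; c 4; v; y; z] = [:: c 0; c 1; c 2; c 3; c 4; v] ++ [:: y; z] by [].
    by rewrite cat_uniq Us6 /= orbF negb_or !notc // inE yz.
  move=> i j Hi Hj.
  case: i Hi => [|[|[|[|[|[|[|[|i]]]]]]]] Hi //; case: j Hj => [|[|[|[|[|[|[|[|j]]]]]]]] Hj //;
    rewrite /adj8 /= ?Firr ?Cc ?Fv ?Fv' //; by rewrite Fsym.
pose cnt t := #|[set y | ty y == t]|.
have clq (L : seq nat) : uniq L ->
    all (fun t1 => all (fun t2 => all (fun t3 => ~~ odd (adjT t1 t2 + adjT t1 t3 + adjT t2 t3)) L) L) L ->
    \sum_(t <- L) cnt t <= h.
  move=> U A; rewrite /cnt -card_types //; apply: Hcl => a b d Ha Hb Hd _; rewrite !K2.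
  rewrite !inE in Ha Hb Hd; exact: (allP (allP (allP A _ Ha) _ Hb) _ Hd).
have tot : \sum_(t <- iota 0 6) cnt t = n.
  rewrite /cnt -card_types ?iota_uniq //.
  transitivity #|[set: 'I_n]|; last by rewrite cardsT card_ord.
  apply: eq_card => y; rewrite !inE; move: (typ_lt6 (bitsF y)); rewrite -/(ty y).
  by case: (ty y) => [|[|[|[|[|[|k]]]]]].
have h1 := clq [:: 1; 2; 3] isT isT.
have h2 := clq [:: 2; 3; 4] isT isT.
have h3 := clq [:: 3; 4; 5] isT isT.
have h4 := clq [:: 4; 5; 1] isT isT.
have h5 := clq [:: 5; 1; 2] isT isT.
have j1 := clq [:: 0; 1; 3] isT isT.
have j2 := clq [:: 0; 2; 4] isT isT.
have j3 := clq [:: 0; 3; 5] isT isT.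
have j4 := clq [:: 0; 4; 1] isT isT.
have j5 := clq [:: 0; 5; 2] isT isT.
move: h1 h2 h3 h4 h5 j1 j2 j3 j4 j5 tot; rewrite /= !big_cons !big_nil.
move: (cnt 0) (cnt 1) (cnt 2) (cnt 3) (cnt 4) (cnt 5) => c0 c1 c2 c3 c4 c5.
rewrite /Tn; case: ifP => H6; lia.
Qed.

Lemma lowerG n (F : 'I_n -> 'I_n -> bool) (v : 'I_n) h :
  (forall x y, F x y = F y x) -> (forall x, F x x = false) -> (forall x, F v x = false) ->
  (forall a b d e, uniq [:: a; b; d; e] -> good4 F a b d e) ->
  cliqueF F h -> Tn n <= h.
Proof.
move=> Fsym Firr Fv NA Hcl.
have Fv' x : F x v = false by rewrite Fsym.
have Fne a b : F a b -> a != b by move=> H; apply/eqP => E; rewrite E Firr in H.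
have Fnv a b : F a b -> a != v by move=> H; apply/eqP => E; rewrite E Fv in H.
have tri a b d : F a b -> F b d -> F a d -> False.
  move=> ab bd ad.
  have U : uniq [:: v; a; b; d].
    rewrite /= !inE !negb_or !(eq_sym v) (Fnv _ _ ab) (Fnv _ _ bd) (Fne _ _ ab) (Fne _ _ ad) (Fne _ _ bd).
    by rewrite (Fnv d b) // Fsym.
  by have := NA _ _ _ _ U; rewrite /good4 !Fv ab bd ad.
have ind (S : {set 'I_n}) : (forall a b, a \in S -> b \in S -> F a b = false) -> #|S| <= h.
  by move=> H; apply: Hcl => a b d Ha Hb Hd _; rewrite !H.
pose deg y := #|[set u | F y u]|.
have [x _ Hx] := @arg_maxnP _ v predT deg isT.
pose N := [set u | F x u].
case: (boolP [exists y, exists z, [&& y \notin N, z \notin N & F y z]]) =>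
    [/existsP [y /existsP [z /and3P [yN zN yz]]] | Hind].
  rewrite !inE in yN zN.
  have xy : x != y by apply/eqP => E; move: zN; rewrite E yz.
  have xz : x != z by apply/eqP => E; move: yN; rewrite E Fsym yz.
  have cover w : F x w -> F w y || F w z.
    move=> xw; apply/negPn/negP; rewrite negb_or => /andP [wy wz].
    have U : uniq [:: x; w; y; z].
      rewrite /= !inE !negb_or xy xz (Fne _ _ xw) (Fne _ _ yz) /= andbT.
      apply/andP; split; apply/eqP => E; [move: yN | move: zN]; by rewrite -E xw.
    by have := NA _ _ _ _ U; rewrite /good4 xw (negbTE yN) (negbTE zN) (negbTE wy) (negbTE wz) yz.
  have big (y' z' : 'I_n) : F y' z' -> ~~ F x z' -> (forall w, F x w -> F w y') -> False.
    move=> yz' xz' H.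
    have : deg x < deg y'.
      apply: proper_card; apply/properP; split.
        by apply/subsetP => u; rewrite !inE => /H; rewrite Fsym.
      by exists z'; rewrite !inE.
    by move=> lt; have := Hx y' isT; rewrite /= leqNgt lt.
  have [w2 xw2 w2y] : exists2 w2, F x w2 & ~~ F w2 y.
    case: (boolP [exists w, F x w && ~~ F w y]) => [/existsP [w /andP [H1 H2]]|H]; first by exists w.
    exfalso; apply: (big y z yz zN) => w xw; apply/negPn/negP => wy.
    by move/existsPn: H => /(_ w); rewrite xw wy.
  have [w1 xw1 w1z] : exists2 w1, F x w1 & ~~ F w1 z.
    case: (boolP [exists w, F x w && ~~ F w z]) => [/existsP [w /andP [H1 H2]]|H]; first by exists w.
    exfalso; apply: (big z y _ yN) => [|w xw]; first by rewrite Fsym.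
    apply/negPn/negP => wz.
    by move/existsPn: H => /(_ w); rewrite xw wz.
  have w1y : F w1 y by move: (cover w1 xw1); rewrite (negbTE w1z) orbF.
  have w2z : F w2 z by move: (cover w2 xw2); rewrite (negbTE w2y).
  have w12 : F w1 w2 = false by apply/negP => H; apply: (tri x w1 w2).
  have e02 : F x y = false by apply/negbTE.
  have e03 : F x z = false by apply/negbTE.
  have e13 : F w1 z = false by apply/negbTE.
  have e24 : F y w2 = false by rewrite Fsym; apply/negbTE.
  pose c i := nth x [:: x; w1; y; z; w2] i.
  apply: (@lowerB n F v c h) => // i j Hi Hj.
  case: i Hi => [|[|[|[|[|i]]]]] Hi //; case: j Hj => [|[|[|[|[|j]]]]] Hj //;
    rewrite /c /= ?Firr ?xw1 ?xw2 ?e02 ?e03 ?w1y ?e13 ?w12 ?yz ?e24 ?w2z //;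
    rewrite Fsym ?Firr ?xw1 ?xw2 ?e02 ?e03 ?w1y ?e13 ?w12 ?yz ?e24 ?w2z //.
have H0 y z : ~~ F x y -> ~~ F x z -> F y z = false.
  move=> yN zN; apply/negP => yz; move/existsPn: Hind => /(_ y) /existsPn /(_ z).
  by rewrite !inE yN zN yz.
pose B := [set u | ~~ F x u & u != v].
have vN : v \notin N by rewrite inE Fv'.
have vB : v \notin B by rewrite inE eqxx andbF.
have hA : #|v |: N| <= h.
  apply: ind => a b; rewrite !inE => /orP [/eqP ->|Ha] /orP [/eqP ->|Hb]; rewrite ?Fv ?Fv' //.
  by apply/negP => ab; apply: (tri x a b).
have hB : #|v |: B| <= h.
  apply: ind => a b; rewrite !inE => /orP [/eqP ->|/andP [Ha _]] /orP [/eqP ->|/andP [Hb _]];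
    rewrite ?Fv ?Fv' //; exact: H0.
rewrite !cardsU1 (negbTE vN) (negbTE vB) /= in hA hB.
have cB : #|B| = #|~: N| - 1.
  have -> : B = (~: N) :\ v by apply/setP => u; rewrite !inE andbC.
  rewrite [in RHS](cardsD1 v (~: N)) in_setC vN /=; lia.
have cN : #|N| + #|~: N| = n by rewrite cardsC card_ord.
have n1 : 0 < #|~: N| by apply/card_gt0P; exists v; rewrite inE.
move: hA hB cB cN n1; move: #|N| #|B| #|~: N| => a b c'. rewrite /Tn; case: ifP => _ *; lia.
Qed.

Lemma clique_hom n (E : {set {set 'I_n}}) (S : {set 'I_n}) :
  (forall a b c, a \in S -> b \in S -> c \in S -> uniq [:: a; b; c] -> [set a; b; c] \in E) ->
  #|S| <= hom_num 3 E.
Proof.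
move=> H; apply: (@leq_bigmax_cond _ (fun S => homogeneous 3 E S) (fun S => #|S|)).
apply/orP; left; apply/forallP => e; apply/implyP => /andP [Hs /eqP He].
have [a [b [c [U Hab]]]] := pick3 He.
by rewrite Hab; apply: H => //; apply: (subsetP Hs); rewrite Hab !inE eqxx ?orbT.
Qed.

Lemma uniq3E (T : eqType) (a b c : T) : uniq [:: a; b; c] -> [/\ a != b, a != c & b != c].
Proof. by rewrite /= !inE !negb_or => /and3P [/andP [-> ->] -> _]. Qed.

Lemma lowerE n (E : {set {set 'I_n}}) : 4 <= n -> uniform 3 E ->
  Qfree E [:: (4, 0); (4, 1); (4, 3)] -> Tn n <= hom_num 3 E.
Proof.
move=> n4 Hu HQ.
have HE e : e \in E -> #|e| = 3 by move/forallP: Hu => /(_ e) /implyP H He; apply/eqP/H.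
rewrite /Qfree /= !andbT in HQ.
have Q4 (S : {set 'I_n}) : #|S| = 4 -> [/\ #|[set e in E | e \subset S]| != 0,
    #|[set e in E | e \subset S]| != 1 & #|[set e in E | e \subset S]| != 3].
  move=> HS; move: HQ => /and3P [/existsPn H0 /existsPn H1 /existsPn H3].
  move: (H0 S) (H1 S) (H3 S); rewrite HS eqxx /=.
  by move=> -> -> ->.
have n0 : 0 < n by lia.
pose v := Ordinal n0.
pose F x y := [&& x != y, x != v, y != v & [set v; x; y] \notin E].
have Fsym x y : F x y = F y x.
  rewrite /F eq_sym; have -> : [set v; x; y] = [set v; y; x] by setsolve.
  by case: (y != x); case: (x != v); case: (y != v).
have Firr x : F x x = false by rewrite /F eqxx.
have Fv x : F v x = false by rewrite /F eqxx /= andbF.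
have Fv' x : F x v = false by rewrite Fsym.
have E3g x y z : uniq [:: v; x; y; z] ->
    ([set x; y; z] \in E) = ~~ odd (F x y + F x z + F y z).
  move=> U; have := Q4 _ (card_set4 U); rewrite card4 //.
  have [[vx vy vz xy xz] yz] := uniq4E U.
  rewrite /F xy xz yz !(eq_sym _ v) vx vy vz /= => -[].
  by case: ([set v; x; y] \in E); case: ([set v; x; z] \in E); case: ([set v; y; z] \in E);
    case: ([set x; y; z] \in E).
have E3 x y z : uniq [:: x; y; z] -> ([set x; y; z] \in E) = ~~ odd (F x y + F x z + F y z).
  move=> U; have [xy xz yz] := uniq3E U.
  case: (eqVneq x v) => [Ex|xv].
    subst x; rewrite !Fv /F yz (eq_sym y) (eq_sym z) xy xz /=.
    by case: (_ \in E).
  case: (eqVneq y v) => [Ey|yv].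
    subst y; rewrite Fv' Fv /F xz (eq_sym z) xv yz /=.
    have -> : [set x; v; z] = [set v; x; z] by setsolve.
    by case: (_ \in E).
  case: (eqVneq z v) => [Ez|zv].
    subst z; rewrite !Fv' /F xy xv yv /=.
    have -> : [set x; y; v] = [set v; x; y] by setsolve.
    by case: (_ \in E).
  apply: E3g; by rewrite /= !inE !negb_or !(eq_sym v) xv yv zv xy xz yz.
have NA a b c d : uniq [:: a; b; c; d] -> good4 F a b c d.
  move=> U; have [[ab ac ad bc bd] cd] := uniq4E U.
  have [H0 _ _] := Q4 _ (card_set4 U); move: H0; rewrite card4 //.
  rewrite !E3 /= ?inE ?negb_or ?ab ?ac ?ad ?bc ?bd ?cd //.
  rewrite /good4; by case: (odd _); case: (odd _); case: (odd _); case: (odd _).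
apply: (@lowerG n F v) => // S HS.
apply: clique_hom => a b c Ha Hb Hc U; rewrite E3 //; exact: HS.
Qed.

Lemma cnt_mod n t : t < 6 -> #|[set x : 'I_n | val x %% 6 == t]| = n %/ 6 + (t < n %% 6).
Proof.
move=> Ht; rewrite -sum1_card big_mkcond /=.
rewrite (eq_bigr (fun i : 'I_n => nat_of_bool (val i %% 6 == t))); last by move=> i _; rewrite inE; case: (_ == _).
rewrite -(big_mkord xpredT (fun i => nat_of_bool (i %% 6 == t))).
elim: n => [|n IH]; first by rewrite big_geq.
rewrite big_nat_recr //= IH.
case: (ltnP t (n %% 6)) => H1; case: (eqVneq (n %% 6) t) => H2; case: (ltnP t (n.+1 %% 6)) => H3; lia.
Qed.

Lemma perm_even (T : finType) (F : T -> T -> bool) (a b c a' b' c' : T) :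
  (forall x y, F x y = F y x) -> uniq [:: a; b; c] -> uniq [:: a'; b'; c'] ->
  [set a; b; c] = [set a'; b'; c'] ->
  ~~ odd (F a b + F a c + F b c) = ~~ odd (F a' b' + F a' c' + F b' c').
Proof.
move=> Fsym U U' E.
have m x : x \in [set a'; b'; c'] -> [|| x == a, x == b | x == c] by rewrite -E !inE -orbA.
have ma : [|| a' == a, a' == b | a' == c] by apply: m; rewrite !inE eqxx.
have mb : [|| b' == a, b' == b | b' == c] by apply: m; rewrite !inE eqxx ?orbT.
have mc : [|| c' == a, c' == b | c' == c] by apply: m; rewrite !inE eqxx ?orbT.
move: ma mb mc => /or3P [] /eqP E3 /or3P [] /eqP E2 /or3P [] /eqP E1 //; subst;
  move: U'; rewrite /= ?inE ?eqxx ?orbT /= ?andbF //= => _;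
  rewrite ?(Fsym b a) ?(Fsym c a) ?(Fsym c b); congr (~~ odd _); lia.
Qed.

Definition ty0 n (x : 'I_n) := val x %% 6.
Definition F0 n (x y : 'I_n) := adjT (ty0 x) (ty0 y).
Definition E0 n : {set {set 'I_n}} :=
  [set e | [exists a, exists b, exists c,
     [&& e == [set a; b; c], uniq [:: a; b; c] & ~~ odd (F0 a b + F0 a c + F0 b c)]]].

Lemma F0sym n (x y : 'I_n) : F0 x y = F0 y x.
Proof. by rewrite /F0 adjT_sym. Qed.

Lemma ty0_lt6 n (x : 'I_n) : ty0 x < 6.
Proof. by rewrite /ty0 ltn_pmod. Qed.

Lemma E0_3 n (a b c : 'I_n) : uniq [:: a; b; c] ->
  ([set a; b; c] \in E0 n) = ~~ odd (F0 a b + F0 a c + F0 b c).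
Proof.
move=> U; rewrite inE; apply/idP/idP.
  move/existsP => [a' /existsP [b' /existsP [c' /and3P [/eqP Ee U' H]]]].
  by rewrite (perm_even (@F0sym n) U U' Ee).
by move=> H; apply/existsP; exists a; apply/existsP; exists b; apply/existsP; exists c; rewrite eqxx U H.
Qed.

Lemma E0_unif n : uniform 3 (E0 n).
Proof.
apply/forallP => e; apply/implyP; rewrite inE.
by move/existsP => [a /existsP [b /existsP [c /and3P [/eqP -> U _]]]]; rewrite card_set3.
Qed.

Definition goodT : bool :=
  all (fun t1 => all (fun t2 => all (fun t3 => all (fun t4 => good4 adjT t1 t2 t3 t4)
    (iota 0 6)) (iota 0 6)) (iota 0 6)) (iota 0 6).
Lemma goodT_ok : goodT. Proof. vm_cast_no_check (erefl true). Qed.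

Lemma NA0 n (a b c d : 'I_n) : good4 (@F0 n) a b c d.
Proof.
have M (x : 'I_n) : ty0 x \in iota 0 6 by rewrite mem_iota ty0_lt6.
by move: (allP (allP (allP (allP goodT_ok _ (M a)) _ (M b)) _ (M c)) _ (M d)).
Qed.

Lemma Qfree_E0 n : Qfree (E0 n) [:: (4, 0); (4, 1); (4, 3)].
Proof.
have key f : f \in [:: 0; 1; 3] -> ~~ has_induced (E0 n) 4 f.
  move=> Hf; apply/existsPn => S; apply/negP => /andP [/eqP HS /eqP Hc].
  have [a [b [c [d [U ES]]]]] := pick4 HS.
  have [[ab ac ad bc bd] cd] := uniq4E U.
  move: Hc; rewrite ES card4 //; last by move=> e; move/forallP: (E0_unif n) => /(_ e) /implyP H /H /eqP.
  rewrite !E0_3 /= ?inE ?negb_or ?ab ?ac ?ad ?bc ?bd ?cd // => Hc.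
  have := NA0 a b c d; rewrite /good4; move: Hc Hf.
  by case: (F0 a b); case: (F0 a c); case: (F0 a d); case: (F0 b c); case: (F0 b d); case: (F0 c d);
    move=> <-.
by rewrite /Qfree /= !key.
Qed.

Definition maxl : seq (seq nat) :=
  [:: [:: 1; 2; 3]; [:: 2; 3; 4]; [:: 3; 4; 5]; [:: 4; 5; 1]; [:: 5; 1; 2];
      [:: 0; 1; 3]; [:: 0; 2; 4]; [:: 0; 3; 5]; [:: 0; 4; 1]; [:: 0; 5; 2]].

Definition compatL (P : seq nat) : bool :=
  all (fun t1 => all (fun t2 => all (fun t3 =>
    if (t1 != t2) && (t1 != t3) && (t2 != t3) then ~~ odd (adjT t1 t2 + adjT t1 t3 + adjT t2 t3)
    else true) P) P) P.

Definition checkC : bool :=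
  all (fun bs => if compatL [seq t <- iota 0 6 | nth false bs t]
                 then has (fun M => all (fun t => t \in M) [seq t <- iota 0 6 | nth false bs t]) maxl
                 else true) (allbits 6).
Lemma checkC_ok : checkC. Proof. vm_cast_no_check (erefl true). Qed.

Lemma sum_sub (f : nat -> nat) (P M : seq nat) : uniq P -> uniq M -> all (fun t => t \in M) P ->
  \sum_(t <- P) f t <= \sum_(t <- M) f t.
Proof.
move=> UP UM /allP sub.
have pe : perm_eq P [seq t <- M | t \in P].
  apply: uniq_perm => //; first exact: filter_uniq.
  by move=> t; rewrite mem_filter; case: (boolP (t \in P)) => // /sub ->.
rewrite (perm_big _ pe) big_filter big_mkcond /=.
by apply: leq_sum => i _; case: (_ \in _).
Qed.

Lemma maxl_bound n : all (fun M => \sum_(t <- M) #|[set x : 'I_n | ty0 x == t]| <= Tn n) maxl.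
Proof.
rewrite /= !big_cons !big_nil /ty0 !cnt_mod // /Tn /dvdn.
move: (ltn_pmod n (isT : 0 < 6)) (divn_eq n 6); move: (n %/ 6) (n %% 6) => q r Hr Hn.
case: r Hr Hn => [|[|[|[|[|[|r]]]]]] //= _ Hn; repeat (apply/andP; split); lia.
Qed.

Lemma hom_E0 n : 4 <= n -> hom_num 3 (E0 n) <= Tn n.
Proof.
move=> n4; apply/bigmax_leqP => S /orP [Hcl|Hco].
  pose p t := [exists x in S, ty0 x == t].
  pose P := [seq t <- iota 0 6 | p t].
  have UP : uniq P by rewrite filter_uniq // iota_uniq.
  have le1 : #|S| <= \sum_(t <- P) #|[set x : 'I_n | ty0 x == t]|.
    rewrite -card_types //; apply: subset_leq_card; apply/subsetP => x xS.
    rewrite inE mem_filter mem_iota ty0_lt6 andbT /p andbT; apply/existsP; exists x; by rewrite xS eqxx.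
  have cP : compatL P.
    apply/allP => t1; rewrite mem_filter /p => /andP [/existsP [x1 /andP [x1S /eqP e1]] _].
    apply/allP => t2; rewrite mem_filter /p => /andP [/existsP [x2 /andP [x2S /eqP e2]] _].
    apply/allP => t3; rewrite mem_filter /p => /andP [/existsP [x3 /andP [x3S /eqP e3]] _].
    case: ifP => // /andP [/andP [t12 t13] t23].
    have n12 : x1 != x2 by apply/eqP => E; move: t12; rewrite -e1 -e2 E eqxx.
    have n13 : x1 != x3 by apply/eqP => E; move: t13; rewrite -e1 -e3 E eqxx.
    have n23 : x2 != x3 by apply/eqP => E; move: t23; rewrite -e2 -e3 E eqxx.
    have U : uniq [:: x1; x2; x3] by rewrite /= !inE !negb_or n12 n13 n23.
    have : [set x1; x2; x3] \in E0 n.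
      move/forallP: Hcl => /(_ [set x1; x2; x3]) /implyP; apply; rewrite card_set3 // eqxx andbT.
      by apply/subsetP => y; rewrite !inE -!orbA => /or3P [] /eqP ->.
    by rewrite E0_3 // /F0 e1 e2 e3.
  have [bs bsP Hbs] : exists2 bs, bs \in allbits 6 & P = [seq t <- iota 0 6 | nth false bs t].
    exists [seq p t | t <- iota 0 6]; first by apply: allbitsP; rewrite size_map size_iota.
    apply: eq_in_filter => t; rewrite mem_iota add0n => /andP [_ Ht].
    by rewrite nth_map_iota.
  have := allP checkC_ok _ bsP; rewrite -Hbs cP => /hasP [M MM sub].
  apply: leq_trans le1 _; apply: leq_trans (sum_sub _ UP _ sub) _.
    by move: MM; rewrite !inE => /orP [/eqP ->|]; [by [] |];
      repeat (case/orP; [by move/eqP -> | ]); move/eqP ->.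
  exact: (allP (maxl_bound n) _ MM).
have T3 : 3 <= Tn n by rewrite /Tn; case: ifP => H; [move/dvdnP: H => [k Hk]; lia | lia].
rewrite leqNgt; apply/negP => lt; have : 4 <= #|S| by lia.
case/pick4sub => a [b [c [d [U aS bS cS dS]]]].
have [[ab ac ad bc bd] cd] := uniq4E U.
have no x y z : x \in S -> y \in S -> z \in S -> uniq [:: x; y; z] -> [set x; y; z] \notin E0 n.
  move=> xS yS zS Uxyz; move/forallP: Hco => /(_ [set x; y; z]) /implyP; apply.
  rewrite card_set3 // eqxx andbT.
  by apply/subsetP => w; rewrite !inE -!orbA => /or3P [] /eqP ->.
have := NA0 a b c d; rewrite /good4.
have u3 (x y z : 'I_n) : x != y -> x != z -> y != z -> uniq [:: x; y; z] by move=> xy xz yz; rewrite /= !inE !negb_or xy xz yz.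
move: (no a b c aS bS cS (u3 _ _ _ ab ac bc)) (no a b d aS bS dS (u3 _ _ _ ab ad bd))
      (no a c d aS cS dS (u3 _ _ _ ac ad cd)) (no b c d bS cS dS (u3 _ _ _ bc bd cd)).
rewrite !E0_3 ?u3 //.
by case: (odd _); case: (odd _); case: (odd _); case: (odd _).
Qed.

Lemma bigmin_le (I : finType) (P : pred I) (f : I -> nat) n0 i :
  P i -> \big[minn/n0]_(j | P j) f j <= f i.
Proof.
move=> Pi; have : i \in index_enum I by rewrite mem_index_enum.
elim: (index_enum I) => [|x r IH] //; rewrite big_cons inE => /orP [/eqP <-|ir].
  by rewrite Pi geq_minl.
case: (P x) => /=; [exact: leq_trans (geq_minr _ _) (IH ir) | exact: IH ir].
Qed.

Theorem mainTheorem11 (n : nat) : 4 <= n ->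
  h_r 3 n [:: (4, 0); (4, 1); (4, 3)] =
  (if 6 %| n then n %/ 2 else (n + 2) %/ 2).
Proof.
move=> n4; change (h_r 3 n [:: (4, 0); (4, 1); (4, 3)] = Tn n).
apply/eqP; rewrite eqn_leq; apply/andP; split.
  rewrite /h_r; apply: leq_trans (hom_E0 n4).
  by apply: (@bigmin_le _ (fun E => uniform 3 E && Qfree E _)); rewrite E0_unif Qfree_E0.
rewrite /h_r; apply: (big_ind (fun x => Tn n <= x)).
- by rewrite /Tn; case: ifP => _; lia.
- by move=> x y Hx Hy; rewrite leq_min Hx Hy.
- by move=> E /andP [Hu HQ]; exact: lowerE.
Qed.
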